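(* Let $C\in\mathbb{F}_p^n$, $C\ne0$, and $(d_1,\dots,d_n)\in\mathbb{F}_p^n$ satisfy $\sum_jM_jC_j=0$, $\Omega^M_jC=d_jC$ for $j=1,\dots,n-1$, and $d_n=0$. Then $\sum_{j=1}^nd_j=\sum_{j=1}^nM_j$ in $\mathbb{F}_p$.
   Context: $p$ is an odd prime, $n\ge2$, and $M_1,\dots,M_n$ are integers with $1\le M_i\le p-1$, viewed in $\mathbb{F}_p$. For $j\ne l$, $\Omega^M_{jl}$ is the $n\times n$ matrix over $\mathbb{F}_p$ with only nonzero entries $(\Omega^M_{jl})_{jj}=M_l$, $(\Omega^M_{jl})_{jl}=-M_l$, $(\Omega^M_{jl})_{lj}=-M_j$, $(\Omega^M_{jl})_{ll}=M_j$; $\Omega^M_j=\sum_{l=j+1}^n\Omega^M_{jl}$; $C$ is a column vector. *)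

(* Defs.v *)
From mathcomp Require Import all_boot all_order all_algebra.
Set Implicit Arguments. Unset Strict Implicit. Unset Printing Implicit Defensive.
Import GRing.Theory.
Local Open Scope ring_scope.

(* Indices 1..n of the paper are 'I_n = {0,..,n-1} here. *)

(* Omega^M_{jl}: only nonzero entries (j,j)=M_l, (j,l)=-M_l, (l,j)=-M_j, (l,l)=M_j
   (intended for j != l). *)
Definition OmegaJL (F : fieldType) (n : nat) (M : 'I_n -> F) (j l : 'I_n)
  : 'M[F]_n :=
  \matrix_(a < n, b < n)
    (if (a == j) && (b == j) then M l
     else if (a == j) && (b == l) then - M l
     else if (a == l) && (b == j) then - M j
     else if (a == l) && (b == l) then M j
     else 0).

Definition OmegaJ (F : fieldType) (n : nat) (M : 'I_n -> F) (j : 'I_n)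
  : 'M[F]_n :=
  \sum_(l < n | (j < l)%N) OmegaJL M j l.

(* Main.v *)
Require Import Defs.
From mathcomp Require Import all_boot all_order all_algebra.
From mathcomp Require Import ring.
Import GRing.Theory.
Local Open Scope ring_scope.

Lemma sum2 (F: fieldType) n (f : 'I_n -> F) j l : j != l ->
  (forall b, b != j -> b != l -> f b = 0) -> \sum_b f b = f j + f l.
Proof.
move=> jl H; rewrite (bigD1 j) //= (bigD1 l) /=; last by rewrite eq_sym.
by rewrite big1 ?addr0 // => b /andP[bj bl]; exact: H.
Qed.

Lemma OJL_entry (F : fieldType) n (Mf : 'I_n -> F) (C : 'cV[F]_n) j l a :
  j != l ->
  (OmegaJL Mf j l *m C) a 0 = if a == j then Mf l * (C j 0 - C l 0)
    else if a == l then Mf j * (C l 0 - C j 0) else 0.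
Proof.
move=> jl; rewrite mxE (@sum2 _ _ _ j l jl); last first.
  by move=> b bj bl; rewrite !mxE (negbTE bj) (negbTE bl) !andbF mul0r.
rewrite !mxE !eqxx (negbTE jl) (eq_sym l j) (negbTE jl) !andbF !andbT /=.
case: (a == j) => /=; first by ring.
case: (a == l) => /=; first by ring.
by rewrite !mul0r addr0.
Qed.

Lemma OJ_lt (F : fieldType) n (Mf : 'I_n -> F) (C : 'cV[F]_n) (j a : 'I_n) :
  (a < j)%N -> (OmegaJ Mf j *m C) a 0 = 0.
Proof.
move=> aj; rewrite /OmegaJ mulmx_suml summxE big1 // => l jl.
rewrite OJL_entry; last by rewrite neq_ltn jl.
have -> : (a == j) = false by apply/negbTE; rewrite neq_ltn aj.
have -> : (a == l) = false by apply/negbTE; rewrite neq_ltn (ltn_trans aj jl).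
by [].
Qed.

Lemma OJ_gt (F : fieldType) n (Mf : 'I_n -> F) (C : 'cV[F]_n) (j a : 'I_n) :
  (j < a)%N -> (OmegaJ Mf j *m C) a 0 = Mf j * (C a 0 - C j 0).
Proof.
move=> ja; rewrite /OmegaJ mulmx_suml summxE (bigD1 a) //= big1 ?addr0.
  rewrite OJL_entry; last by rewrite neq_ltn ja.
  by rewrite eqxx; have -> : (a == j) = false by apply/negbTE; rewrite neq_ltn ja orbT.
move=> l /andP[jl la]; rewrite OJL_entry; last by rewrite neq_ltn jl.
have -> : (a == j) = false by apply/negbTE; rewrite neq_ltn ja orbT.
by rewrite eq_sym (negbTE la).
Qed.

Lemma OJ_eq (F : fieldType) n (Mf : 'I_n -> F) (C : 'cV[F]_n) (j : 'I_n) :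
  (OmegaJ Mf j *m C) j 0 = \sum_(l < n | (j < l)%N) Mf l * (C j 0 - C l 0).
Proof.
rewrite /OmegaJ mulmx_suml summxE; apply: eq_bigr => l jl.
by rewrite OJL_entry ?eqxx // neq_ltn jl.
Qed.

Theorem corollary5p4 (p : nat) (hp : prime p) (hodd : odd p)
  (n : nat) (hn : (2 <= n)%N)
  (M : 'I_n -> nat) (hM : forall i, (1 <= M i <= p.-1)%N)
  (C : 'cV['F_p]_n) (hC : C != 0) (d : 'I_n -> 'F_p)
  (hsum : \sum_(j < n) (M j)%:R * C j ord0 = 0)
  (heig : forall j : 'I_n, (j < n.-1)%N ->
     OmegaJ (fun i => (M i)%:R : 'F_p) j *m C = d j *: C)
  (hdn : forall j : 'I_n, (j : nat) = n.-1 -> d j = 0) :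
  \sum_(j < n) d j = \sum_(j < n) ((M j)%:R : 'F_p).
Proof.
set Mf := (fun i => (M i)%:R : 'F_p) in heig *.
have [i0 Hi0] : exists i, C i ord0 != 0.
  have : ~~ [forall i, C i ord0 == 0].
    apply: contra hC => /forallP H; apply/eqP/matrixP => i k.
    by rewrite (ord1 k) mxE; exact/eqP.
  by move/forallPn => [i Hi]; exists i.
case: (@arg_minnP _ i0 (fun i => C i ord0 != 0) (fun i : 'I_n => (i : nat)) Hi0) => k Ck kmin.
have Cz : forall j : 'I_n, (j < k)%N -> C j 0 = 0.
  move=> j jk; apply/eqP; apply: contraTT jk; rewrite -leqNgt; exact: kmin.
have le_n1 : forall j : 'I_n, (j <= n.-1)%N.
  by move=> j; rewrite -ltnS prednK ?ltn_ord // (leq_trans _ hn).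
have hT : \sum_(l < n | (k < l)%N) Mf l * C l 0 = - (Mf k * C k 0).
  move: hsum; rewrite (bigID (fun l : 'I_n => (l < k)%N)) /= big1; last first.
    by move=> l lk; rewrite Cz // mulr0.
  rewrite add0r (bigD1 k) /= ?ltnn //.
  rewrite (eq_bigl (fun l : 'I_n => (k < l)%N)); last first.
    by move=> l; rewrite -leqNgt ltn_neqAle andbC eq_sym.
  by move/eqP; rewrite addrC addr_eq0 => /eqP.
have dval : forall j : 'I_n, d j = if (j < k)%N then Mf j
    else if j == k then \sum_(l < n | (k <= l)%N) Mf l else 0.
  move=> j; case: ifP => jk.
    have jn : (j < n.-1)%N by apply: leq_trans jk (le_n1 k).
    move/(congr1 (fun A : 'cV['F_p]_n => A k 0)): (heig j jn).
    rewrite OJ_gt // mxE (Cz j jk) subr0 => H.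
    by apply: (mulIf Ck); rewrite -H.
  case: eqP => [->|jk'].
    rewrite (bigD1 k) //=.
    rewrite (eq_bigl (fun l : 'I_n => (k < l)%N)); last first.
      by move=> l; rewrite ltn_neqAle andbC eq_sym.
    case: (ltnP k n.-1) => kn.
      move/(congr1 (fun A : 'cV['F_p]_n => A k 0)): (heig k kn).
      rewrite OJ_eq mxE.
      have H2 : \sum_(l < n | (k < l)%N) Mf l * (C k 0 - C l 0) =
          C k 0 * \sum_(l < n | (k < l)%N) Mf l - \sum_(l < n | (k < l)%N) Mf l * C l 0.
        by rewrite mulr_sumr -sumrB; apply: eq_bigr => l _; ring.
      rewrite H2 hT => H.
      apply: (mulIf Ck); rewrite -H; ring.
    have kn1 : (k : nat) = n.-1 by apply/eqP; rewrite eqn_leq kn le_n1.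
    have E : forall (F : 'I_n -> 'F_p), \sum_(l < n | (k < l)%N) F l = 0.
      move=> F; rewrite big_pred0 // => l; rewrite kn1 ltnNge le_n1.
      by [].
    move: hT; rewrite E => /eqP; rewrite eq_sym oppr_eq0 mulf_eq0 (negbTE Ck) orbF.
    move/eqP => ->.
    by rewrite E add0r hdn.
  have kj : (k < j)%N.
    by rewrite ltn_neqAle leqNgt jk andbT; apply/eqP => /val_inj /esym.
  case: (ltnP j n.-1) => jn.
    move/(congr1 (fun A : 'cV['F_p]_n => A k 0)): (heig j jn).
    rewrite OJ_lt // mxE => /esym /eqP; rewrite mulf_eq0 (negbTE Ck) orbF.
    by move/eqP.
  by apply: hdn; apply/eqP; rewrite eqn_leq jn le_n1.
rewrite (eq_bigr _ (fun j _ => dval j)).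
rewrite (bigID (fun j : 'I_n => (j < k)%N)) /=.
rewrite [RHS](bigID (fun j : 'I_n => (j < k)%N)) /=.
congr (_ + _).
  by apply: eq_bigr => j ->.
set S := \sum_(l < n | (k <= l)%N) Mf l.
have -> : \sum_(i < n | ~~ (i < k)%N) (if (i < k)%N then Mf i else if i == k then S else 0) = S.
  rewrite (bigD1 k) /= ?ltnn // eqxx big1 ?addr0 //.
  move=> j /andP[jk jk'].
  by rewrite (negbTE jk) (negbTE jk').
by apply: eq_bigl => j; rewrite -leqNgt.
Qed.
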